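(* Let $n\ge 1$ and $k\ge 3$ be integers and $p:=k-2$. Let $\{v_1,\dots,v_n\}$ be an orthonormal basis of $\mathbb{R}^n$ and $\lambda_r,\kappa_r\in\mathbb{R}$ with $\kappa_r<0$ for all $r$. Let $\mathcal A=\sum_{r=1}^n\lambda_r v_r^{\otimes k}$, $K=\sum_{r=1}^n\kappa_r v_rv_r^\top$, and consider $\dot x=Kx+\mathcal A x^{k-1}$ with modal coordinates $y_r(t)=v_r^\top x(t)$. Let $\mathcal I_+:=\{r:\lambda_r>0\}$, $\mathcal I_-:=\{r:\lambda_r<0\}$; for $r\in\mathcal I_+$ let $c_r:=(-\kappa_r/\lambda_r)^{1/p}>0$, and for $p$ odd and $r\in\mathcal I_-$ let $c_r:=-(\kappa_r/\lambda_r)^{1/p}<0$. Let $\mathcal R_{\mathrm{even}}:=\{x_0: |v_r^\top x_0|<c_r\ \forall r\in\mathcal I_+\}$ and $\mathcal R_{\mathrm{odd}}:=\{x_0: v_r^\top x_0<c_r\ \forall r\in\mathcal I_+,\ v_r^\top x_0>c_r\ \forall r\in\mathcal I_-\}$. Fix $\varepsilon>0$ and an initial condition $x_0$ with $x_0\in\mathcal R_{\mathrm{even}}$ if $p$ is even, or $x_0\in\mathcal R_{\mathrm{odd}}$ if $p$ is odd. For each $r$ let $T_{\varepsilon,r}:=\inf\{t\ge 0: |y_r(t)|\le\varepsilon\}$, $y_{r,0}:=v_r^\top x_0$ and $\alpha_r:=-\kappa_r>0$. Then each mode is well-defined for all $t\ge 0$ and reaches the band $|y_r(t)|\le\varepsilon$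 in finite time. If $|y_{r,0}|\le\varepsilon$ then $T_{\varepsilon,r}=0$. Otherwise ($|y_{r,0}|>\varepsilon$): (i) if $\lambda_r=0$, then $T_{\varepsilon,r}=\frac{1}{\alpha_r}\ln\big(|y_{r,0}|/\varepsilon\big)$; (ii) if $\lambda_r\neq 0$ and $p$ is even, then $$T_{\varepsilon,r}=\frac{1}{p\alpha_r}\ln\!\left(\frac{\varepsilon^{-p}-\lambda_r/\alpha_r}{|y_{r,0}|^{-p}-\lambda_r/\alpha_r}\right),$$ where the logarithm's argument is $>1$ for any $x_0\in\mathcal R_{\mathrm{even}}$ and any sufficiently small $\varepsilon>0$; (iii) if $\lambda_r\neq 0$ and $p$ is odd, then $$T_{\varepsilon,r}=\frac{1}{p\alpha_r}\ln\!\left(\frac{\varepsilon^{-p}-\operatorname{sign}(y_{r,0})\lambda_r/\alpha_r}{|y_{r,0}|^{-p}-\operatorname{sign}(y_{r,0})\lambda_r/\alpha_r}\right),$$ where the logarithm's argument is $>1$ for any $x_0\in\mathcal R_{\mathrm{odd}}$ and any sufficiently small $\varepsilon>0$.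
   Context: For $v\in\mathbb{R}^n$, $v^{\otimes k}$ is the $k$th-order tensor with entries $(v^{\otimes k})_{i_1\cdots i_k}=v_{i_1}\cdots v_{i_k}$. For a $k$th-order tensor $\mathcal A=(a_{i_1\cdots i_k})$ and $x\in\mathbb{R}^n$, $(\mathcal A x^{k-1})_i=\sum_{i_2,\dots,i_k=1}^n a_{i i_2\cdots i_k}x_{i_2}\cdots x_{i_k}$. *)

(* Defs.v *)
From HB Require Import structures.
From mathcomp Require Import all_boot all_order all_algebra.
From mathcomp Require Import all_classical all_reals all_analysis.
Set Implicit Arguments. Unset Strict Implicit. Unset Printing Implicit Defensive.
Import Order.TTheory GRing.Theory Num.Theory.
Import numFieldNormedType.Exports.
Local Open Scope classical_set_scope.
Local Open Scope ring_scope.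

Section Defs.
Variable R : realType.
Variables n k : nat.

Definition dotv (u w : 'cV[R]_n) : R := \sum_(i < n) u i ord0 * w i ord0.

Definition tensor := {ffun 'I_k -> 'I_n} -> R.

Definition tpow (v : 'cV[R]_n) : tensor :=
  fun ix => \prod_(j < k) v (ix j) ord0.

(* (A x^{k-1})_i = sum_{i_2..i_k} a_{i i_2 .. i_k} x_{i_2} ... x_{i_k}
   (multi-indices ix with first coordinate i) *)
Definition tapply (A : tensor) (x : 'cV[R]_n) : 'cV[R]_n :=
  \col_(i < n) \sum_(ix : {ffun 'I_k -> 'I_n} |
                    [forall j : 'I_k, (val j == 0%N) ==> (ix j == i)])
      A ix * \prod_(j : 'I_k | val j != 0%N) x (ix j) ord0.

Definition Aten (lam : 'I_n -> R) (v : 'I_n -> 'cV[R]_n) : tensor :=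
  fun ix => \sum_(r < n) lam r * tpow (v r) ix.

Definition Kmat (kap : 'I_n -> R) (v : 'I_n -> 'cV[R]_n) : 'M[R]_n :=
  \sum_(r < n) kap r *: (v r *m (v r)^T).

Definition field (lam kap : 'I_n -> R) (v : 'I_n -> 'cV[R]_n) (x : 'cV[R]_n)
  : 'cV[R]_n := Kmat kap v *m x + tapply (Aten lam v) x.

Definition is_solution (lam kap : 'I_n -> R) (v : 'I_n -> 'cV[R]_n)
    (x0 : 'cV[R]_n) (x : R -> 'cV[R]_n) : Prop :=
  x 0 = x0 /\ x t @[t --> 0^'+] --> x0 /\
  forall t : R, 0 < t -> is_derive t 1 x (field lam kap v (x t)).

Definition pexp : nat := (k - 2)%N.

Definition cplus (lam kap : 'I_n -> R) (r : 'I_n) : R :=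
  (- kap r / lam r) `^ (pexp%:R^-1).

Definition cminus (lam kap : 'I_n -> R) (r : 'I_n) : R :=
  - ((kap r / lam r) `^ (pexp%:R^-1)).

Definition R_even (lam kap : 'I_n -> R) (v : 'I_n -> 'cV[R]_n) (x0 : 'cV[R]_n)
  : Prop :=
  forall r, 0 < lam r -> `|dotv (v r) x0| < cplus lam kap r.

Definition R_odd (lam kap : 'I_n -> R) (v : 'I_n -> 'cV[R]_n) (x0 : 'cV[R]_n)
  : Prop :=
  (forall r, 0 < lam r -> dotv (v r) x0 < cplus lam kap r) /\
  (forall r, lam r < 0 -> cminus lam kap r < dotv (v r) x0).

End Defs.

(* Main.v *)
Require Import Defs.
From HB Require Import structures.
From mathcomp Require Import all_boot all_order all_algebra.
From mathcomp Require Import all_classical all_reals all_analysis.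
From mathcomp Require Import ring lra zify.
Import Order.TTheory GRing.Theory Num.Theory.
Import numFieldNormedType.Exports.
Local Open Scope classical_set_scope.
Local Open Scope ring_scope.



Section Alg.
Variable R : realType.
Variable n : nat.
Variable v : 'I_n -> 'cV[R]_n.

Lemma tapply_Aten (k : nat) (lam : 'I_n -> R) (x : 'cV[R]_n) : (0 < k)%N ->
  tapply (Aten (k:=k) lam v) x =
  \sum_(s < n) (lam s * dotv (v s) x ^+ k.-1) *: v s.
Proof.
case: k => // k' _.
apply/matrixP => i j; rewrite (ord1 j) !mxE summxE.
under eq_bigr => ix _ do rewrite /Aten mulr_suml.
rewrite exchange_big /=; apply: eq_bigr => s _.
rewrite !mxE.
pose G := fun (j : 'I_k'.+1) (l : 'I_n) =>
  if val j == 0%N then v s l ord0 else v s l ord0 * x l ord0.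
pose Q := fun (j : 'I_k'.+1) (l : 'I_n) => (val j == 0%N) ==> (l == i).
transitivity (lam s * \sum_(f in family Q) \prod_j G j (f j)).
  rewrite mulr_sumr; apply: eq_big => ix.
    by rewrite inE.
  move=> _; rewrite /tpow -mulrA; congr (_ * _).
  rewrite [X in _ * X]big_mkcond -big_split /=; apply: eq_bigr => jj _.
  by rewrite /G; case: (val jj == 0%N); rewrite /= ?mulr1.
rewrite -bigA_distr_big_dep big_ord_recl /= /Q /G /=.
rewrite big_pred1_eq.
have -> : \prod_(i0 < k') \sum_(j0 < n) G (lift ord0 i0) j0 = dotv (v s) x ^+ k'.
  rewrite (eq_bigr (fun _ => dotv (v s) x)); first by rewrite prodr_const card_ord.
  by move=> jj _; rewrite /dotv /G.
by ring.
Qed.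

Lemma Kmat_mul (kap : 'I_n -> R) (x : 'cV[R]_n) :
  Kmat kap v *m x = \sum_(s < n) (kap s * dotv (v s) x) *: v s.
Proof.
apply/matrixP => i j; rewrite (ord1 j) !mxE summxE.
under eq_bigr => l _ do rewrite summxE mulr_suml.
rewrite exchange_big /=; apply: eq_bigr => s _.
rewrite !mxE /dotv mulr_sumr mulr_suml; apply: eq_bigr => l _.
rewrite !mxE big_ord1 !mxE; ring.
Qed.

Lemma dotvC (u w : 'cV[R]_n) : dotv u w = dotv w u.
Proof. by rewrite /dotv; apply: eq_bigr => i _; rewrite mulrC. Qed.

Lemma dotv_sum (u : 'cV[R]_n) (c : 'I_n -> R) :
  dotv u (\sum_(s < n) c s *: v s) = \sum_(s < n) c s * dotv u (v s).
Proof.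
rewrite /dotv; under eq_bigr => i _ do rewrite summxE mulr_sumr.
rewrite exchange_big /=; apply: eq_bigr => s _.
rewrite mulr_sumr; apply: eq_bigr => i _; rewrite !mxE; ring.
Qed.

Hypothesis horth : forall r s : 'I_n, dotv (v r) (v s) = (r == s)%:R.

Lemma dotv_coord (r : 'I_n) (c : 'I_n -> R) :
  dotv (v r) (\sum_(s < n) c s *: v s) = c r.
Proof.
rewrite dotv_sum (bigD1 r) //= horth eqxx mulr1 big1 ?addr0 // => s sr.
by rewrite horth eq_sym (negbTE sr) mulr0.
Qed.

Lemma basis_decomp (x : 'cV[R]_n) : x = \sum_(s < n) dotv (v s) x *: v s.
Proof.
pose V : 'M[R]_n := \matrix_(i, j) v j i ord0.
have h1 : V^T *m V = 1%:M.
  apply/matrixP => i j; rewrite !mxE -horth /dotv; apply: eq_bigr => l _.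
  by rewrite !mxE.
have h2 := mulmx1C h1.
apply/matrixP => i j; rewrite (ord1 j).
have := congr1 (fun M => (M *m x) i ord0) h2.
rewrite mul1mx => <-; rewrite -mulmxA !mxE summxE.
apply: eq_bigr => s _; rewrite !mxE mulrC /dotv; congr (_ * _); apply: eq_bigr => l _.
by rewrite !mxE.
Qed.

Lemma field_coord (kk : nat) (lam kap : 'I_n -> R) (x : 'cV[R]_n) (r : 'I_n) :
  (0 < kk)%N ->
  dotv (v r) (field kk lam kap v x) =
  kap r * dotv (v r) x + lam r * dotv (v r) x ^+ kk.-1.
Proof.
move=> kk0; rewrite /field Kmat_mul tapply_Aten // -big_split /=.
under eq_bigr => s _ do rewrite -scalerDl.
by rewrite dotv_coord.
Qed.

Lemma field_decomp (kk : nat) (lam kap : 'I_n -> R) (x : 'cV[R]_n) :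
  (0 < kk)%N ->
  field kk lam kap v x = \sum_(s < n)
    (kap s * dotv (v s) x + lam s * dotv (v s) x ^+ kk.-1) *: v s.
Proof.
move=> kk0; rewrite /field Kmat_mul tapply_Aten // -big_split /=.
by under eq_bigr => s _ do rewrite -scalerDl.
Qed.
End Alg.



Section Calc.
Variable R : realType.

Lemma cvg_sumf {T} (F : set_system T) {FF : Filter F} (m : nat)
   (f : 'I_m -> T -> R) (a : 'I_m -> R) :
  (forall i, f i @ F --> a i) -> (fun s => \sum_(i < m) f i s) @ F --> \sum_(i < m) a i.
Proof.
move=> H; rewrite -fct_sumE.
apply: (big_ind2 (fun g b => g @ F --> b)) => //.
- exact: cvg_cst.
- by move=> g1 b1 g2 b2 h1 h2; apply: cvgD.
Qed.

Lemma is_derive_sumf (m : nat) (f : 'I_m -> R -> R) (df : 'I_m -> R) (t : R) :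
  (forall i, is_derive t 1 (f i) (df i)) ->
  is_derive t 1 (fun s => \sum_(i < m) f i s) (\sum_(i < m) df i).
Proof.
move=> H; rewrite -fct_sumE; exact: is_derive_sum.
Qed.

Lemma is_derive_mx_entry m p (M : R -> 'M[R]_(m, p)) (t : R) (D : 'M[R]_(m, p)) i j :
  is_derive t 1 M D -> is_derive t 1 (fun s => M s i j) (D i j).
Proof.
case=> dM <-; apply: DeriveDef.
  by move/derivable_mxP : dM; apply.
by rewrite derive_mx // mxE.
Qed.

Lemma is_derive_mx m p (M : R -> 'M[R]_(m, p)) (t : R) (D : 'M[R]_(m, p)) :
  (forall i j, is_derive t 1 (fun s => M s i j) (D i j)) -> is_derive t 1 M D.
Proof.
move=> H.
have dM : derivable M t 1 by apply/derivable_mxP => i j; case: (H i j).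
apply: DeriveDef => //; rewrite derive_mx //; apply/matrixP => i j.
by rewrite mxE; case: (H i j).
Qed.

Lemma is_derive_dotv n (u : 'cV[R]_n) (x : R -> 'cV[R]_n) dx (t : R) :
  is_derive t 1 x dx -> is_derive t 1 (fun s => dotv u (x s)) (dotv u dx).
Proof.
move=> H; rewrite /dotv; apply: is_derive_sumf => i.
have := is_deriveZ (u i ord0) (@is_derive_mx_entry _ _ _ _ _ i ord0 H).
by [].
Qed.

Lemma cvg_dotv n (u : 'cV[R]_n) {T} (F : set_system T) {FF : Filter F}
  (x : T -> 'cV[R]_n) x0 :
  x @ F --> x0 -> (fun s => dotv u (x s)) @ F --> dotv u x0.
Proof.
move=> H; rewrite /dotv; apply: cvg_sumf => i.
apply: cvgMl_tmp.
have := continuous_cvg _ (@coord_continuous R n 1 i ord0 x0) H. by move=> /(_ FF).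
Qed.

End Calc.



Section Uniq.
Variable R : realType.

Lemma is_derive_lin (c t : R) : is_derive t 1 (fun s : R => c * s) c.
Proof.
have := is_deriveZ c (@is_derive_id _ _ t 1).
by rewrite /GRing.scale /= mulr1.
Qed.

Lemma is_derive_expl (c t : R) :
  is_derive t 1 (fun s : R => expR (c * s)) (c * expR (c * t)).
Proof.
have := is_derive1_comp (f := expR) (is_derive_expR (c * t)) (is_derive_lin c t).
by rewrite mulrC.
Qed.

Lemma is_derive_cont (f : R -> R) (t df : R) : is_derive t 1 f df -> {for t, continuous f}.
Proof.
by case=> df1 _; apply: differentiable_continuous; apply/derivable1_diffP.
Qed.

Lemma wcont (g : R -> R) (t : R) : 0 < t ->
  g @ 0^'+ --> g 0 ->
  (forall s, 0 < s -> derivable g s 1) ->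
  {within `[0, t], continuous g}.
Proof.
move=> t0 g0 dg; apply/continuous_within_itvP => //; split => //.
- move=> s; rewrite in_itv /= => /andP[s0 _].
  by apply: differentiable_continuous; apply/derivable1_diffP; exact: dg.
- apply: cvg_at_left_filter.
  by apply: differentiable_continuous; apply/derivable1_diffP; exact: dg.
Qed.

Lemma bounded_on (g : R -> R) (t : R) : 0 < t ->
  g @ 0^'+ --> g 0 ->
  (forall s, 0 < s -> derivable g s 1) ->
  exists M, 0 <= M /\ forall s, 0 <= s <= t -> `|g s| <= M.
Proof.
move=> t0 g0 dg.
have wc := @wcont g t t0 g0 dg.
have [c1 _ h1] := EVT_max (ltW t0) wc.
have [c2 _ h2] := EVT_min (ltW t0) wc.
exists (`|g c1| + `|g c2|); split; first by rewrite addr_ge0.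
move=> s hs.
have hs' : s \in `[0, t] by rewrite in_itv /=.
have := h1 _ hs'; have := h2 _ hs'.
have := normr_ge0 (g c1); have := normr_ge0 (g c2).
have := ler_norm (g c1); have := ler_norm (- g c2); rewrite normrN.
rewrite ler_norml => *; apply/andP; split; lra.
Qed.


Variables (kp lm : R) (m : nat).
Definition Fo (u : R) := kp * u + lm * u ^+ m.

Lemma lipF (M u w : R) : 0 <= M -> `|u| <= M -> `|w| <= M ->
  `|Fo u - Fo w| <= (`|kp| + `|lm| * (m%:R * M ^+ m.-1)) * `|u - w|.
Proof.
move=> M0 uM wM.
have -> : Fo u - Fo w = (u - w) * (kp + lm * \sum_(i < m) u ^+ (m.-1 - i) * w ^+ i).
  rewrite /Fo mulrDr [X in _ = _ + X]mulrCA -subrXX; ring.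
rewrite normrM mulrC ler_wpM2r //.
apply: (le_trans (ler_normD _ _)); rewrite lerD2l normrM ler_wpM2l //.
apply: (le_trans (ler_norm_sum _ _ _)).
have -> : m%:R * M ^+ m.-1 = \sum_(i < m) M ^+ m.-1.
  by rewrite sumr_const card_ord mulr_natl.
apply: ler_sum => i _.
have -> : M ^+ m.-1 = M ^+ (m.-1 - i) * M ^+ i.
  rewrite -exprD subnK //; have := ltn_ord i; lia.
rewrite normrM !normrX; apply: ler_pM; rewrite ?exprn_ge0 //.
  by apply: lerXn2r; rewrite // inE.
by apply: lerXn2r; rewrite // inE.
Qed.

Lemma ode_uniq (y z : R -> R) : y 0 = z 0 ->
  y @ 0^'+ --> y 0 -> z @ 0^'+ --> z 0 ->
  (forall t : R, 0 < t -> is_derive t 1 y (Fo (y t))) ->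
  (forall t : R, 0 < t -> is_derive t 1 z (Fo (z t))) ->
  forall t : R, 0 <= t -> y t = z t.
Proof.
move=> yz0 y0 z0 dy dz t; rewrite le_eqVlt => /orP[/eqP <- //|t0].
have dy1 : forall s, 0 < s -> derivable y s 1 by move=> s /dy [].
have dz1 : forall s, 0 < s -> derivable z s 1 by move=> s /dz [].
have [My [My0 hMy]] := @bounded_on y t t0 y0 dy1.
have [Mz [Mz0 hMz]] := @bounded_on z t t0 z0 dz1.
set M := My + Mz.
set L := `|kp| + `|lm| * (m%:R * M ^+ m.-1).
have L0 : 0 <= L by rewrite addr_ge0 // mulr_ge0 // mulr_ge0 // exprn_ge0 // addr_ge0.
pose g := fun s => (y s - z s) * (y s - z s) * expR ((- (2 * L)) * s).
have dg : forall s : R, 0 < s -> is_derive s 1 g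
   ((y s - z s) * (y s - z s) * ((- (2 * L)) * expR ((- (2 * L)) * s)) +
    expR ((- (2 * L)) * s) * ((y s - z s) * (Fo (y s) - Fo (z s)) +
                              (y s - z s) * (Fo (y s) - Fo (z s)))).
  move=> s s0.
  have hd : is_derive s 1 (y - z) (Fo (y s) - Fo (z s)) by apply: is_deriveB; [exact: dy|exact: dz].
  have hdd := is_deriveM hd hd.
  have := is_deriveM hdd (is_derive_expl (- (2 * L)) s).
  by rewrite /GRing.scale /=.
have g00 : g 0 = 0 by rewrite /g yz0 subrr !mul0r.
have gc0 : g @ 0^'+ --> g 0.
  have hdz : (fun s : R => y s - z s) @ (0:R)^'+ --> 0.
    by have := cvgB y0 z0; rewrite -yz0 subrr => h; exact: h.
  have hexp : (fun s : R => expR ((- (2 * L)) * s)) @ (0:R)^'+ --> expR ((- (2 * L)) * 0).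
    have h := @is_derive_cont _ _ _ (is_derive_expl (- (2 * L)) 0). exact: (cvg_at_right_filter h).
  have F0 : Filter ((0:R)^'+) by exact: at_right_proper_filter.
  have := @cvgM _ _ _ F0 _ _ _ _ (@cvgM _ _ _ F0 _ _ _ _ hdz hdz) hexp. by rewrite !mul0r g00.
have dg1 : forall s : R, 0 < s -> derivable g s 1 by move=> s /dg [].
have wg := @wcont g t t0 gc0 dg1.
have dgi : forall s : R, s \in `]0, t[ -> derivable g s 1.
  by move=> s; rewrite in_itv /= => /andP[s0 _]; exact: dg1.
have hneg : forall s : R, s \in `]0, t[ -> (g^`())%classic s <= 0.
  move=> s; rewrite in_itv /= => /andP[s0 st].
  rewrite derive1E; have [_ ->] := dg s s0.
  have hy : `|y s| <= M.
    apply: (le_trans (hMy s _)); first by rewrite (ltW s0) (ltW st).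
    by rewrite lerDl.
  have hz : `|z s| <= M.
    apply: (le_trans (hMz s _)); first by rewrite (ltW s0) (ltW st).
    by rewrite lerDr.
  have M0 : 0 <= M by rewrite addr_ge0.
  have hl := lipF _ _ _ M0 hy hz.
  have e0 := expR_gt0 (- (2 * L) * s).
  set e := expR _ in e0 *.
  set d := y s - z s in hl *.
  set q := Fo (y s) - Fo (z s) in hl *.
  have h1 : d * q <= L * (d * d).
    apply: (le_trans (ler_norm _)); rewrite normrM.
    have -> : d * d = `|d| * `|d| by rewrite -normrM ger0_norm // -expr2 sqr_ge0.
    by rewrite [leRHS]mulrCA ler_wpM2l.
  rewrite -mulr_natl; nra.
have key : g t <= g 0.
  apply: (@ler0_derive1_le_cc R g 0 t dgi hneg wg).
  - by rewrite in_itv /= lexx (ltW t0).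
  - by rewrite in_itv /= lexx (ltW t0).
  - by rewrite (ltW t0).
move: key; rewrite g00 /g.
have e0 := expR_gt0 (- (2 * L) * t).
set e := expR _ in e0 *; set d := y t - z t => key.
have : d * d <= 0 by nra.
move=> hd; apply/eqP; rewrite -subr_eq0 -/d; apply/eqP; nra.
Qed.

End Uniq.



Section Expl.
Variable R : realType.
Variables (a lm y0 : R) (p : nat).
Hypothesis a0 : 0 < a.
Hypothesis p0 : (0 < p)%N.
Let b := lm / a * y0 ^+ p.
Hypothesis hb : b < 1.
Let c := p%:R * a.
Let r : R := - (p%:R^-1).
Definition Ef (t : R) := (1 - b) * expR (c * t) + b.
Definition Yf (t : R) := y0 * (Ef t) `^ r.

Lemma Ef0 : Ef 0 = 1.
Proof. by rewrite /Ef mulr0 expR0 mulr1 subrK. Qed.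

Lemma Ef_ge1 t : 0 <= t -> 1 <= Ef t.
Proof.
move=> t0; rewrite /Ef.
have : 1 <= expR (c * t) by rewrite -expR0 ler_expR mulr_ge0 // mulr_ge0 // ltW.
move=> h; have := hb; nra.
Qed.

Lemma Yf0 : Yf 0 = y0.
Proof. by rewrite /Yf Ef0 powR1 mulr1. Qed.

Lemma is_derive_Ef (t : R) : is_derive t 1 Ef (c * (Ef t - b)).
Proof.
have := is_deriveD (is_deriveZ (1 - b) (@is_derive_expl R c t)) (is_derive_cst b t 1).
rewrite /GRing.scale /= addr0 => h.
have -> : c * (Ef t - b) = (1 - b) * (c * expR (c * t)) by rewrite /Ef; ring.
exact: h.
Qed.

Lemma is_derive_Yf (t : R) : 0 <= t -> is_derive t 1 Yf (@Fo R (- a) lm p.+1 (Yf t)).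
Proof.
move=> t0.
have E1 := Ef_ge1 t t0.
have Epos : 0 < Ef t by apply: lt_le_trans E1.
have h1 := is_derive1_comp (f := fun x : R => x `^ r) (is_derive1_powR r Epos) (is_derive_Ef t).
have h2 := is_deriveZ y0 h1.
have pn0 : p%:R != 0 :> R by rewrite pnatr_eq0 -lt0n.
set w := Ef t `^ r.
have wp : w ^+ p = (Ef t)^-1.
  rewrite /w -powR_mulrn ?powR_ge0 // -powRrM /r mulNr mulVf // powR_inv1 //.
  exact: ltW.
have wr : Ef t `^ (r - 1) = w * (Ef t)^-1.
  rewrite powRD; last by rewrite (gt_eqF Epos) implybT.  
  by rewrite (powR_inv1 (ltW Epos)).
apply: (is_derive_eq h2).
rewrite /GRing.scale /= wr /Fo /Yf -/w exprMn [w ^+ _]exprS wp /c /r /b.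
have aneq : a != 0 by rewrite gt_eqF.
have Eneq : Ef t != 0 by rewrite gt_eqF.
rewrite exprS.
move: aneq Eneq pn0; set Z := y0 ^+ p; set P : R := p%:R; set E := Ef t => aneq Eneq pn0.
by field; rewrite ?aneq ?Eneq ?pn0.
Qed.


Let q : R := p%:R^-1.

Lemma pn0' : p%:R != 0 :> R.
Proof. by rewrite pnatr_eq0 -lt0n. Qed.

Lemma Pf_ge1 t : 0 <= t -> 1 <= Ef t `^ q.
Proof.
move=> t0; rewrite -(powRr0 (Ef t)); apply: ler_powR; first exact: Ef_ge1.
by rewrite /q invr_ge0.
Qed.

Lemma PfX t : 0 <= t -> (Ef t `^ q) ^+ p = Ef t.
Proof.
move=> t0; have E1 := Ef_ge1 t t0.
rewrite -powR_mulrn ?powR_ge0 // -powRrM /q mulVf ?pn0' // powRr1 //.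
exact: le_trans E1.
Qed.

Lemma absYf t : 0 <= t -> `|Yf t| = `|y0| / Ef t `^ q.
Proof.
move=> t0; rewrite /Yf /r powRN normrM [X in _ * X]ger0_norm //.
by rewrite invr_ge0 powR_ge0.
Qed.

Lemma Yf_small t eps : 0 <= t -> `|y0| <= eps -> `|Yf t| <= eps.
Proof.
move=> t0 h; rewrite absYf //; apply: le_trans h.
have P1 := Pf_ge1 t t0.
rewrite ler_pdivrMr; last exact: lt_le_trans P1.
by rewrite ler_peMr.
Qed.

Definition Wf eps := ((`|y0| / eps) ^+ p - b) / (1 - b).

Lemma Wf_gt1 eps : 0 < eps -> eps < `|y0| -> 1 < Wf eps.
Proof.
move=> e0 ey; rewrite /Wf ltr_pdivlMr ?subr_gt0 // mul1r ltrD2r.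
rewrite exprn_egt1 ?ltr_pdivlMr ?mul1r //; by rewrite -lt0n.
Qed.

Lemma band_iff eps t : 0 < eps -> eps < `|y0| -> 0 <= t ->
  (`|Yf t| <= eps) <-> (c^-1 * ln (Wf eps) <= t).
Proof.
move=> e0 ey t0.
have P1 := Pf_ge1 t t0.
have Ppos : 0 < Ef t `^ q by exact: lt_le_trans P1.
have c0 : 0 < c by rewrite /c mulr_gt0 // ltr0n.
have W1 := Wf_gt1 eps e0 ey.
have W0 : 0 < Wf eps by apply: lt_trans W1.
rewrite ler_pdivrMl // -[(ln _ <= _)%R]ler_expR lnK ?posrE //.
rewrite absYf // ler_pdivrMr // -(ler_pdivrMl _ _ e0).
rewrite -(ler_pXn2r p0); first last.
- by rewrite nnegrE ltW.
- by rewrite nnegrE mulr_ge0 ?invr_ge0 ?(ltW e0).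
rewrite PfX // /Wf /Ef [eps^-1 * _]mulrC ler_pdivrMr ?subr_gt0 // lerBlDr.
by rewrite [expR _ * _]mulrC.
Qed.

End Expl.

Lemma inf_char (R : realType) (S : set R) (T0 : R) :
  (forall t, S t <-> T0 <= t) -> inf S = T0.
Proof.
move=> hS; apply/eqP; rewrite eq_le; apply/andP; split.
  have : has_lbound S by exists T0 => t /hS.
  by move/ge_inf; apply; apply/hS.
by apply: lb_le_inf; [exists T0; apply/hS | move=> t /hS].
Qed.



Lemma coord_main (R : realType) (a lm y0 eps : R) (p : nat) (y : R -> R) :
  0 < a -> (0 < p)%N -> lm / a * y0 ^+ p < 1 -> 0 < eps ->
  y 0 = y0 -> y @ 0^'+ --> y0 ->
  (forall t : R, 0 < t -> is_derive t 1 y (Fo R (- a) lm p.+1 (y t))) ->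
  let T := inf [set t : R | 0 <= t /\ `|y t| <= eps] in
  (exists t, 0 <= t /\ `|y t| <= eps) /\
  (`|y0| <= eps -> T = 0) /\
  (eps < `|y0| -> 1 < Wf R a lm y0 p eps /\ T = (p%:R * a)^-1 * ln (Wf R a lm y0 p eps)).
Proof.
move=> a0 p0 hb e0 yy0 yc dy T.
have dY := @is_derive_Yf R a lm y0 p a0 p0 hb.
have eqY : forall t, 0 <= t -> y t = Yf R a lm y0 p t.
  apply: (@ode_uniq R (- a) lm p.+1).
  - by rewrite yy0 (@Yf0 R a lm y0 p).
  - by rewrite yy0.
  - apply: cvg_at_right_filter.
    exact: (@is_derive_cont R _ _ _ (dY 0 (lexx 0))).
  - by move=> t t0; apply: dY; apply: ltW.
have c0 : 0 < p%:R * a by rewrite mulr_gt0 // ltr0n.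
have [small|big] := leP `|y0| eps.
  have hS : forall t, (0 <= t /\ `|y t| <= eps) <-> 0 <= t.
    move=> t; split => [[]//|t0]; split => //.
    by rewrite eqY //; apply: (@Yf_small R a lm y0 p a0 hb).
  split; first by exists 0; apply/hS.
  split; first by move=> _; rewrite /T; apply: (@inf_char R).
  by [].
have W1 := @Wf_gt1 R a lm y0 p p0 hb eps e0 big.
have T0 : 0 <= (p%:R * a)^-1 * ln (Wf R a lm y0 p eps).
  by rewrite mulr_ge0 ?invr_ge0 ?ltW // ln_gt0.
have hS : forall t, (0 <= t /\ `|y t| <= eps) <->
    (p%:R * a)^-1 * ln (Wf R a lm y0 p eps) <= t.
  move=> t; split => [[t0]|tT].
    by rewrite eqY // (@band_iff R a lm y0 p a0 p0 hb eps t e0 big t0).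
  have t0 : 0 <= t by apply: le_trans tT.
  by split => //; rewrite eqY // (@band_iff R a lm y0 p a0 p0 hb eps t e0 big t0).
split; first by exists ((p%:R * a)^-1 * ln (Wf R a lm y0 p eps)); apply/hS.
split; first by [].
by move=> _; split => //; rewrite /T; apply: (@inf_char R).
Qed.



Lemma cpowX (R : realType) (u : R) (p : nat) : (0 < p)%N -> 0 <= u ->
  (u `^ (p%:R^-1)) ^+ p = u.
Proof.
move=> p0 u0.
rewrite -powR_mulrn ?powR_ge0 // -powRrM mulVf ?powRr1 //.
by rewrite pnatr_eq0 -lt0n.
Qed.

Lemma region_b (R : realType) (n k : nat) (v : 'I_n -> 'cV[R]_n)
  (lam kap : 'I_n -> R) (x0 : 'cV[R]_n) :
  (3 <= k)%N -> (forall r, kap r < 0) ->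
  (if odd (pexp k) then R_odd k lam kap v x0 else R_even k lam kap v x0) ->
  forall r, lam r / (- kap r) * dotv (v r) x0 ^+ pexp k < 1.
Proof.
move=> hk hkap hx0 r.
have p0 : (0 < pexp k)%N by rewrite /pexp; lia.
set p := pexp k in hx0 p0 *.
set y := dotv (v r) x0.
have a0 : 0 < - kap r by rewrite oppr_gt0.
set a := - kap r in a0 *.
rewrite mulrAC ltr_pdivrMr // mul1r.
have [hl|hl|->] := ltrgtP (lam r) 0; last by rewrite mul0r.
-
  have w0 : 0 < kap r / lam r.
    by rewrite -mulrNN -invrN divr_gt0 // oppr_gt0 // hkap.
  have hw : kap r / lam r * lam r = - a by rewrite divfK ?lt_eqF // opprK.
  move: hx0; case: ifP => hodd.
  + case=> _ /(_ r hl); rewrite /cminus -/p -/y => hy.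
    have [y0|y0] := leP 0 y.
      have : 0 <= y ^+ p by rewrite exprn_ge0.
      nra.
    have : (- y) ^+ p < ((kap r / lam r) `^ (p%:R^-1)) ^+ p.
      rewrite ltr_pXn2r // ?nnegrE ?powR_ge0 //; first lra.
      lra.
    rewrite cpowX ?(ltW w0) // exprNn -signr_odd hodd expr1 mulN1r => h.
    nra.
  + have : 0 <= y ^+ p by rewrite exprn_even_ge0 ?hodd.
    nra.
-
  have w0 : 0 < - kap r / lam r by rewrite divr_gt0.
  have hw : - kap r / lam r * lam r = a by rewrite divfK ?gt_eqF.
  move: hx0; case: ifP => hodd.
  + case=> /(_ r hl); rewrite /cplus -/p -/y => hy _.
    have [y0|y0] := leP y 0.
      have : y ^+ p <= 0 by rewrite exprn_odd_le0.
      nra.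
    have : y ^+ p < ((- kap r / lam r) `^ (p%:R^-1)) ^+ p.
      by rewrite ltr_pXn2r // ?nnegrE ?powR_ge0 // ltW.
    rewrite cpowX ?(ltW w0) // => h.
    nra.
  + move=> /(_ r hl); rewrite /cplus -/p -/y => hy.
    have : `|y| ^+ p < ((- kap r / lam r) `^ (p%:R^-1)) ^+ p.
      by rewrite ltr_pXn2r // ?nnegrE ?powR_ge0.
    rewrite cpowX ?(ltW w0) // -normrX ger0_norm ?exprn_even_ge0 ?hodd // => h.
    nra.
Qed.

Lemma arg_gen (R : realType) (a lm y0 eps s : R) (p : nat) :
  0 < a -> (0 < p)%N -> lm / a * y0 ^+ p < 1 -> 0 < eps -> eps < `|y0| ->
  y0 ^+ p = s * `|y0| ^+ p ->
  (eps ^- p - s * lm / a) / (`|y0| ^- p - s * lm / a) = Wf R a lm y0 p eps.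
Proof.
move=> a0 p0 hb e0 ey hs.
rewrite /Wf hs expr_div_n.
have Z0 : 0 < `|y0| ^+ p by rewrite exprn_gt0 // (lt_trans e0).
have E0 : 0 < eps ^+ p by rewrite exprn_gt0.
move: hb; rewrite hs => hb.
set Z := `|y0| ^+ p in Z0 hb *; set E := eps ^+ p in E0 *.
have hb' : 1 - lm / a * (s * Z) != 0 by rewrite subr_eq0 eq_sym lt_eqF.
have aneq : a != 0 by rewrite gt_eqF.
have Zneq : Z != 0 by rewrite gt_eqF.
have Eneq : E != 0 by rewrite gt_eqF.
have h1 : lm * (s * Z) < a by move: hb; rewrite mulrAC ltr_pdivrMr // mul1r.
field; rewrite aneq Eneq Zneq subr_eq0 /=.
by rewrite gt_eqF.
Qed.

Lemma arg_zero (R : realType) (a y0 eps : R) (p : nat) :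
  0 < a -> (0 < p)%N -> 0 < eps -> eps < `|y0| ->
  (p%:R * a)^-1 * ln (Wf R a 0 y0 p eps) = a^-1 * ln (`|y0| / eps).
Proof.
move=> a0 p0 e0 ey.
rewrite /Wf !mul0r subr0 subr0 divr1 lnXn; last by rewrite divr_gt0 // (lt_trans e0).
have pn0 : p%:R != 0 :> R by rewrite pnatr_eq0 -lt0n.
have aneq : a != 0 by rewrite gt_eqF.
rewrite -mulr_natr; move: pn0; set P : R := p%:R => pn0; set L := ln _.
field; by rewrite pn0 aneq.
Qed.



Theorem proposition2 (R : realType) (n k : nat)
  (hn : (1 <= n)%N) (hk : (3 <= k)%N)
  (v : 'I_n -> 'cV[R]_n) (lam kap : 'I_n -> R)
  (horth : forall r s : 'I_n, dotv (v r) (v s) = (r == s)%:R)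
  (hkap : forall r, kap r < 0)
  (eps : R) (heps : 0 < eps) (x0 : 'cV[R]_n)
  (hx0 : if odd (pexp k) then R_odd k lam kap v x0
         else R_even k lam kap v x0) :
  (exists x : R -> 'cV[R]_n, is_solution k lam kap v x0 x) /\
  forall x : R -> 'cV[R]_n, is_solution k lam kap v x0 x ->
  forall r : 'I_n,
    let y := fun t => dotv (v r) (x t) in
    let y0 := dotv (v r) x0 in
    let a := - kap r in
    let p : R := (pexp k)%:R in
    let T := inf [set t : R | 0 <= t /\ `|y t| <= eps] in
    (exists t, 0 <= t /\ `|y t| <= eps) /\
    (`|y0| <= eps -> T = 0) /\
    (eps < `|y0| ->
      (lam r = 0 -> T = a^-1 * ln (`|y0| / eps)) /\
      (lam r != 0 -> ~~ odd (pexp k) ->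
        let arg := (eps ^- pexp k - lam r / a) / (`|y0| ^- pexp k - lam r / a) in
        1 < arg /\ T = (p * a)^-1 * ln arg) /\
      (lam r != 0 -> odd (pexp k) ->
        let arg := (eps ^- pexp k - Num.sg y0 * lam r / a)
                   / (`|y0| ^- pexp k - Num.sg y0 * lam r / a) in
        1 < arg /\ T = (p * a)^-1 * ln arg)).
Proof.
have p0 : (0 < pexp k)%N by rewrite /pexp; lia.
have k0 : (0 < k)%N by lia.
have k1 : (pexp k).+1 = k.-1 by rewrite /pexp; lia.
have hb := @region_b R n k v lam kap x0 hk hkap hx0.
have a0 : forall r, 0 < - kap r by move=> r; rewrite oppr_gt0.
pose Ys s := Yf R (- kap s) (lam s) (dotv (v s) x0) (pexp k).
have dYs : forall s (t : R), 0 <= t -> is_derive t 1 (Ys s)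
    (kap s * Ys s t + lam s * Ys s t ^+ k.-1).
  move=> s t t0; have := @is_derive_Yf R _ _ _ _ (a0 s) p0 (hb s) t t0.
  by rewrite /Fo opprK k1.
split.
  pose X := fun t => \sum_(s < n) Ys s t *: v s.
  have dX : forall t : R, 0 <= t -> is_derive t 1 X (field k lam kap v (X t)).
    move=> t t0; apply: is_derive_mx => i j.
    rewrite field_decomp // summxE.
    have -> : (fun s => X s i j) = (fun s => \sum_(l < n) v l i j * Ys l s).
      apply: funext => s; rewrite /X summxE; apply: eq_bigr => l _.
      by rewrite mxE mulrC.
    under eq_bigr => l _ do rewrite /X dotv_coord // mxE mulrC.
    apply: is_derive_sumf => l.
    exact: (is_deriveZ (v l i j) (dYs l t t0)).
  exists X; split; last split.
  - rewrite /X; under eq_bigr => s _ do rewrite /Ys Yf0.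
    by rewrite -basis_decomp.
  - have := dX 0 (lexx 0); case=> dX0 _.
    have cX : {for 0, continuous X}.
      by apply: differentiable_continuous; apply/derivable1_diffP.
    have -> : x0 = X 0.
      rewrite /X; under eq_bigr => s _ do rewrite /Ys Yf0.
      by rewrite -basis_decomp.
    exact: cvg_at_right_filter.
  - by move=> t t0; apply: dX; apply: ltW.
move=> x [hx00 [hxc hxd]] r y y0 a p T.
have Hy0 : y 0 = y0 by rewrite /y /y0 hx00.
have Hyc : y @ 0^'+ --> y0 by exact: cvg_dotv.
have Hyd : forall t : R, 0 < t -> is_derive t 1 y (Fo R (- a) (lam r) (pexp k).+1 (y t)).
  move=> t t0; have := @is_derive_dotv R n (v r) x _ t (hxd t t0).
  by rewrite field_coord // /Fo /a opprK k1.
have := @coord_main R a (lam r) y0 eps (pexp k) y (a0 r) p0 (hb r) heps Hy0 Hyc Hyd.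
move=> [ex [z0 big]].
split; first exact: ex.
split; first exact: z0.
move=> hbig; have [W1 TW] := big hbig.
have y0n : y0 != 0.
  by apply/eqP => h; move: hbig; rewrite h normr0 => /(lt_trans heps); rewrite ltxx.
split; last split.
- move=> l0; rewrite /T TW l0.
  exact: (@arg_zero R a y0 eps (pexp k) (a0 r) p0 heps hbig).
- move=> _ hev arg.
  have hs : y0 ^+ pexp k = 1 * `|y0| ^+ pexp k.
    by rewrite mul1r -normrX ger0_norm // exprn_even_ge0.
  have := @arg_gen R a (lam r) y0 eps 1 (pexp k) (a0 r) p0 (hb r) heps hbig hs.
  rewrite mul1r => hA.
  by rewrite /arg hA /T TW.
- move=> _ hod arg.
  have hs : y0 ^+ pexp k = Num.sg y0 * `|y0| ^+ pexp k.
    by rewrite {1}(numEsg y0) exprMn sgr_odd // hod expr1.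
  have hA := @arg_gen R a (lam r) y0 eps (Num.sg y0) (pexp k) (a0 r) p0 (hb r) heps hbig hs.
  by rewrite /arg hA /T TW.
Qed.
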